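(* Let $k,n$ be integers with $2\le k\le n$. Then \[ S(n,n-k,k)=\binom{n}{k}-T(n,k+1,k). \] Moreover, if $k\le n-1$, then also $T(n,k+1,k)=C(n,n-k,n-k-1)$, so that $C(n,n-k,n-k-1)=\binom nk - S(n,n-k,k)$.
   Context: A CNF formula over variables $x_1,\dots,x_n$ is a conjunction of clauses, each clause a disjunction of literals (variables or negated variables); the width of a clause is its number of literals; a $k$-CNF is a CNF all of whose clauses have width at most $k$. For an assignment $a\in\{0,1\}^n$, $\mathrm{wt}(a)=\sum_i a_i$ is its Hamming weight. For a formula $F$, $\mathrm{sat}_t(F)$ is the set of satisfying assignments of $F$ of Hamming weight exactly $t$. $F$ is called $t$-admissible if it has no satisfying assignment of Hamming weight less than $t$. $S(n,t,k)$ is the maximum of $|\mathrm{sat}_t(F)|$ over all $t$-admissible $k$-CNF formulas $F$ on $n$ variables. A $k$-set system over a universe $U$ is a collection of $k$-element subsets of $U$; its size is the number of sets. The Turán number $T(n,q,k)$ is the size of the smallest $k$-set system $\mathcal S$ over $[n]$ such that every $q$-element subset of $[n]$ contains at least one member of $\mathcal S$ (if $q>n$ this is vacuous and $T(n,q,k)=0$). The covering number $C(n,q,k)$ is the size of the smallest $q$-set system $\mathcal S$ over $[n]$ such that every $k$-element subset of $[n]$ is contained in at least one member of $\mathcal S$. *)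

(* Defs.v *)
From mathcomp Require Import all_boot all_order all_algebra.
Set Implicit Arguments. Unset Strict Implicit. Unset Printing Implicit Defensive.

(* Variables x_1..x_n are indexed by 'I_n.
   A literal is a pair (i, b): (i, true) is x_i, (i, false) is the negation of x_i. *)
Definition literal (n : nat) := ('I_n * bool)%type.
Definition clause (n : nat) := {set literal n}.
Definition cnf (n : nat) := {set clause n}.
Definition assignment (n : nat) := {ffun 'I_n -> bool}.

Definition wt n (a : assignment n) : nat := \sum_(i < n) nat_of_bool (a i).

Definition lit_sat n (a : assignment n) (l : literal n) : bool := a l.1 == l.2.
Definition clause_sat n (a : assignment n) (C : clause n) : bool :=
  [exists l in C, lit_sat a l].
Definition cnf_sat n (a : assignment n) (F : cnf n) : bool :=
  [forall C in F, clause_sat a C].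

Definition width n (C : clause n) : nat := #|C|.
Definition is_kcnf n (k : nat) (F : cnf n) : bool := [forall C in F, width C <= k].

Definition sat_t n (t : nat) (F : cnf n) : {set assignment n} :=
  [set a | cnf_sat a F & wt a == t].

Definition admissible n (t : nat) (F : cnf n) : bool :=
  [forall a : assignment n, cnf_sat a F ==> (t <= wt a)].

(* S(n,t,k): maximum of |sat_t(F)| over t-admissible k-CNF F on n variables.
   (The candidate set is nonempty: the formula consisting of the empty clause
   is admissible and a k-CNF.) *)
Definition S (n t k : nat) : nat :=
  \max_(F : cnf n | admissible t F && is_kcnf k F) #|sat_t t F|.

(* Minimum over a predicate of set systems; the default value (the number of
   all set systems) is an upper bound of every candidate size, and is only
   returned when there are no candidates. *)
Definition min_size n (P : pred {set {set 'I_n}}) : nat :=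
  \big[minn/#|[set: {set {set 'I_n}}]|]_(Sy | P Sy) #|Sy|.

Definition turan_ok n (q k : nat) (Sy : {set {set 'I_n}}) : bool :=
  [forall A in Sy, #|A| == k] &&
  [forall Q : {set 'I_n}, (#|Q| == q) ==> [exists A in Sy, A \subset Q]].
Definition T (n q k : nat) : nat := min_size (@turan_ok n q k).

Definition cover_ok n (q k : nat) (Sy : {set {set 'I_n}}) : bool :=
  [forall A in Sy, #|A| == q] &&
  [forall K : {set 'I_n}, (#|K| == k) ==> [exists A in Sy, K \subset A]].
Definition C (n q k : nat) : nat := min_size (@cover_ok n q k).

(* Main.v *)
Require Import Defs.
From mathcomp Require Import all_boot all_order all_algebra.
From mathcomp Require Import zify.
Set Implicit Arguments. Unset Strict Implicit. Unset Printing Implicit Defensive.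

Lemma card_setT_big (X : finType) : #|[set: X]| < #|[set: {set X}]|.
Proof.
have ->: [set: {set X}] = powerset [set: X].
  by apply/setP => A; rewrite inE powersetE subsetT.
by rewrite card_powerset ltn_expl.
Qed.

Lemma small_sys (X : finType) (Sy : {set {set X}}) : #|Sy| <= #|[set: {set {set X}}]|.
Proof.
apply: leq_trans (ltnW (card_setT_big _)).
by apply: subset_leq_card; apply: subsetT.
Qed.

Section Aux.
Variable n : nat.

Lemma min_size_top (P : pred {set {set 'I_n}}) : min_size P <= #|[set: {set {set 'I_n}}]|.
Proof.
rewrite /min_size; elim/big_ind: _ => // [x y Hx Hy|Sy _].
  by rewrite geq_min Hx.
exact: small_sys.
Qed.

Lemma min_size_le (P : pred {set {set 'I_n}}) Sy : P Sy -> min_size P <= #|Sy|.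
Proof.
move=> PS; rewrite /min_size.
elim: (index_enum _) (mem_index_enum Sy) => //= x s IH.
rewrite inE big_cons => /orP[/eqP<-|/IH H]; first by rewrite PS geq_minl.
by case: (P x) => //; rewrite geq_min H orbT.
Qed.

Lemma min_size_attained (P : pred {set {set 'I_n}}) Sy0 : P Sy0 ->
  exists2 Sy, P Sy & min_size P = #|Sy|.
Proof.
move=> P0; case: (@arg_minnP _ Sy0 P (fun Sy : {set {set 'I_n}} => #|Sy|) P0) => m Pm Hm.
exists m => //; apply/eqP; rewrite eqn_leq min_size_le //=.
rewrite /min_size; elim/big_ind: _ => [|x y Hx Hy|S1 PS].
- exact: small_sys.
- by rewrite leq_min Hx Hy.
- exact: Hm.
Qed.

Lemma min_size_mono (P Q : pred {set {set 'I_n}}) :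
  (forall Sy, P Sy -> exists2 Sy', Q Sy' & #|Sy'| <= #|Sy|) ->
  min_size Q <= min_size P.
Proof.
move=> H; case: (pickP P) => [Sy PS|P0].
  have [Sy1 P1 ->] := min_size_attained PS.
  have [Sy' Q' le'] := H _ P1.
  exact: leq_trans (min_size_le Q') le'.
rewrite {2}/min_size big_pred0 //; exact: min_size_top.
Qed.

Definition asgZ (Z : {set 'I_n}) : assignment n := [ffun i => i \notin Z].
Definition zs (a : assignment n) : {set 'I_n} := [set i | ~~ a i].

Lemma zsK Z : zs (asgZ Z) = Z.
Proof. by apply/setP => i; rewrite !inE ffunE negbK. Qed.

Lemma asgZK a : asgZ (zs a) = a.
Proof. by apply/ffunP => i; rewrite ffunE inE negbK. Qed.

Lemma wt_zs a : wt a = n - #|zs a|.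
Proof.
have H : #|zs a| + #|~: zs a| = n by rewrite cardsC card_ord.
transitivity #|~: zs a|; last by lia.
rewrite /wt -sum1_card [RHS]big_mkcond /=; apply: eq_bigr => i _.
by rewrite !inE negbK; case: (a i).
Qed.

Lemma wt_asgZ Z : wt (asgZ Z) = n - #|Z|.
Proof. by rewrite wt_zs zsK. Qed.

End Aux.

Section Main.
Variables n k : nat.
Hypothesis hkn : k <= n.

Definition good (F : cnf n) := [set Z : {set 'I_n} | (#|Z| == k) && cnf_sat (asgZ Z) F].
Definition bad (F : cnf n) := [set Z : {set 'I_n} | (#|Z| == k) && ~~ cnf_sat (asgZ Z) F].

Lemma card_le_n (Z : {set 'I_n}) : #|Z| <= n.
Proof. by rewrite -[X in _ <= X](card_ord n) max_card. Qed.

Lemma cardC_n (Z : {set 'I_n}) : #|Z| + #|~: Z| = n.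
Proof. by rewrite cardsC card_ord. Qed.

Lemma good_bad F : #|good F| + #|bad F| = 'C(n, k).
Proof.
have := card_draws 'I_n k; rewrite card_ord => <-.
rewrite -[RHS](cardsID [set Z : {set 'I_n} | cnf_sat (asgZ Z) F]).
congr (_ + _); apply: eq_card => Z; rewrite !inE //.
by rewrite andbC.
Qed.

Lemma sat_good F : #|sat_t (n - k) F| = #|good F|.
Proof.
have -> : sat_t (n - k) F = (@asgZ n) @: good F.
  apply/setP => a; rewrite inE; apply/andP/imsetP.
    move=> [sa /eqP wa]; exists (zs a); last by rewrite asgZK.
    rewrite inE asgZK sa andbT; apply/eqP.
    have := card_le_n (zs a); rewrite wt_zs in wa; lia.
  move=> [Z]; rewrite inE => /andP[/eqP HZ sZ] ->; split => //.
  by rewrite wt_asgZ HZ.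
apply: card_imset; exact: (can_inj (@zsK n)).
Qed.

Lemma bad_turan F : admissible (n - k) F -> is_kcnf k F -> turan_ok k.+1 k (bad F).
Proof.
move=> adm kc; apply/andP; split.
  by apply/forall_inP => A; rewrite inE => /andP[].
apply/forallP => Q; apply/implyP => /eqP HQ.
have nsQ : ~~ cnf_sat (asgZ Q) F.
  apply/negP => sQ; have := forallP adm (asgZ Q); rewrite sQ /= wt_asgZ HQ.
  have := card_le_n Q; lia.
have [C CF nC] : exists2 C, C \in F & ~~ clause_sat (asgZ Q) C.
  move: nsQ; rewrite /cnf_sat negb_forall_in => /existsP [C /andP [CF nC]].
  by exists C.
have wC : #|C| <= k by have := forall_inP kc C CF.
set P := [set j in Q | (j, true) \in C].
have : #|P| < #|Q|.
  rewrite HQ ltnS; apply: leq_trans wC.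
  rewrite -(card_imset P (f := fun j : 'I_n => (j, true))); last by move=> x y [].
  apply: subset_leq_card; apply/subsetP => l /imsetP [j]; rewrite inE => /andP[_ jC] ->.
  exact: jC.
move=> ltPQ.
have : ~~ (Q \subset P).
  apply/negP => /subset_leq_card; rewrite leqNgt ltPQ //.
case/subsetPn => j jQ; rewrite inE jQ /= => jnC.
apply/exists_inP; exists (Q :\ j); last by apply: subsetDl.
rewrite inE; apply/andP; split.
  by apply/eqP; have := cardsD1 j Q; rewrite jQ HQ; lia.
rewrite /cnf_sat negb_forall_in; apply/existsP; exists C; rewrite CF /=.
apply/negP => /exists_inP [[i b] lC sl]; apply: (negP nC); apply/exists_inP.
exists (i, b) => //; move: sl; rewrite /lit_sat /= !ffunE.
case: (eqVneq i j) => [eij|nij]; last by rewrite in_setD1 nij.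
subst i; rewrite setD11 /= => /eqP bt; subst b.
by rewrite lC in jnC.
Qed.

Lemma T_le_bad F : admissible (n - k) F -> is_kcnf k F -> T n k.+1 k <= #|bad F|.
Proof. by move=> a b; apply: min_size_le; apply: bad_turan. Qed.

Lemma S_upper : S n (n - k) k <= 'C(n, k) - T n k.+1 k.
Proof.
apply/bigmax_leqP => F /andP [a b].
have := T_le_bad a b; have := good_bad F; rewrite sat_good; lia.
Qed.

Lemma turan_exists : turan_ok k.+1 k [set A : {set 'I_n} | #|A| == k].
Proof.
apply/andP; split; first by apply/forall_inP => A; rewrite inE.
apply/forallP => Q; apply/implyP => /eqP HQ.
have : 0 < #|Q| by rewrite HQ.
case/card_gt0P => j jQ.
apply/exists_inP; exists (Q :\ j); last by apply: subsetDl.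
by rewrite inE; apply/eqP; have := cardsD1 j Q; rewrite jQ HQ; lia.
Qed.

Definition pos (A : {set 'I_n}) : clause n := [set (i, true) | i in A].

Lemma cnf_sat_pos (Sy : {set {set 'I_n}}) a :
  cnf_sat a [set pos A | A in Sy] = [forall A in Sy, ~~ (A \subset zs a)].
Proof.
apply/forall_inP/forall_inP => H A HA.
  have := H (pos A) (imset_f _ HA).
  case/exists_inP => l /imsetP [i iA ->]; rewrite /lit_sat /= => /eqP ai.
  by apply/negP => /subsetP /(_ i iA); rewrite inE ai.
case/imsetP: HA => B BS ->; have := H B BS.
case/subsetPn => i iB; rewrite inE negbK => ai.
apply/exists_inP; exists (i, true); first exact: imset_f.
by rewrite /lit_sat /= ai.
Qed.

Lemma S_lower : 'C(n, k) - T n k.+1 k <= S n (n - k) k.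
Proof.
have [Sy tS HT] := min_size_attained turan_exists; rewrite /T HT.
case/andP: (tS) => /forall_inP cS /forallP tQ.
set F := [set pos A | A in Sy].
have badF : bad F = Sy.
  apply/setP => Z; rewrite inE cnf_sat_pos zsK.
  case: (boolP (Z \in Sy)) => ZS.
    rewrite (cS Z ZS) /=; apply/negP => /forall_inP /(_ Z ZS).
    by rewrite subxx.
  apply/negP => /andP [/eqP HZ /forall_inP []] A AS.
  apply/negP => AZ; move: ZS; suff -> : Z = A by rewrite AS.
  apply/esym/eqP; rewrite eqEcard AZ HZ /=.
  by move/eqP: (cS A AS) => ->.
have adm : admissible (n - k) F.
  apply/forallP => a; apply/implyP; rewrite cnf_sat_pos => /forall_inP sa.
  rewrite leqNgt; apply/negP => lt.
  have : k.+1 <= #|zs a| by move: lt; rewrite wt_zs; have := card_le_n (zs a); lia.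
  case/card_geqP => s [us ss sub].
  have HQ : #|[set x in s]| == k.+1 by rewrite cardsE (card_uniqP us) ss.
  case/exists_inP: (implyP (tQ _) HQ) => A AS AQ.
  apply: (negP (sa A AS)); apply: subset_trans AQ _.
  by apply/subsetP => x; rewrite inE => /sub.
have kc : is_kcnf k F.
  apply/forall_inP => C /imsetP [A AS ->].
  by rewrite /width; apply: leq_trans (leq_imset_card _ _) _; move/eqP: (cS A AS) => ->.
have := good_bad F; rewrite badF -sat_good => H.
rewrite -H addnK.
by apply: (leq_bigmax_cond F (P := fun F => admissible (n - k) F && is_kcnf k F)); rewrite adm kc.
Qed.

Lemma S_eq : S n (n - k) k + T n k.+1 k = 'C(n, k).
Proof.
have hT : T n k.+1 k <= 'C(n, k).
  have := card_draws 'I_n k; rewrite card_ord => <-.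
  exact: (min_size_le turan_exists).
have := S_upper; have := S_lower; lia.
Qed.

Definition cmp (Sy : {set {set 'I_n}}) := [set ~: A | A in Sy].

Lemma card_cmp Sy : #|cmp Sy| = #|Sy|.
Proof. apply: card_imset; exact: setC_inj. Qed.

Lemma cmpK Sy : cmp (cmp Sy) = Sy.
Proof.
rewrite /cmp -imset_comp (eq_imset _ (fun A => setCK A)) imset_id //.
Qed.

Hypothesis hkn1 : k < n.

Lemma turan_cover Sy : turan_ok k.+1 k Sy -> cover_ok (n - k) (n - k - 1) (cmp Sy).
Proof.
case/andP => /forall_inP cS /forallP tQ; apply/andP; split.
  apply/forall_inP => B /imsetP [A AS ->]; move/eqP: (cS A AS) => HA.
  by apply/eqP; have := cardC_n A; lia.
apply/forallP => K; apply/implyP => /eqP HK.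
have HQ : #|~: K| == k.+1 by apply/eqP; have := cardC_n K; rewrite HK; lia.
case/exists_inP: (implyP (tQ _) HQ) => A AS AQ.
apply/exists_inP; exists (~: A); first exact: imset_f.
by rewrite subsetC.
Qed.

Lemma cover_turan Sy : cover_ok (n - k) (n - k - 1) Sy -> turan_ok k.+1 k (cmp Sy).
Proof.
case/andP => /forall_inP cS /forallP tQ; apply/andP; split.
  apply/forall_inP => B /imsetP [A AS ->]; move/eqP: (cS A AS) => HA.
  by apply/eqP; have := cardC_n A; lia.
apply/forallP => Q; apply/implyP => /eqP HQ.
have HK : #|~: Q| == n - k - 1 by apply/eqP; have := cardC_n Q; rewrite HQ; lia.
case/exists_inP: (implyP (tQ _) HK) => A AS AQ.
apply/exists_inP; exists (~: A); first exact: imset_f.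
by rewrite subCset.
Qed.

Lemma T_C : T n k.+1 k = C n (n - k) (n - k - 1).
Proof.
apply/eqP; rewrite eqn_leq; apply/andP; split; apply: min_size_mono => Sy H.
  by exists (cmp Sy); [apply: cover_turan | rewrite card_cmp].
by exists (cmp Sy); [apply: turan_cover | rewrite card_cmp].
Qed.

End Main.

Theorem theorem1 (n k : nat) (hk2 : 2 <= k) (hkn : k <= n) :
  ((S n (n - k) k)%:Z = ('C(n, k))%:Z - (T n k.+1 k)%:Z)%R /\
  (k <= n - 1 ->
     T n k.+1 k = C n (n - k) (n - k - 1) /\
     ((C n (n - k) (n - k - 1))%:Z = ('C(n, k))%:Z - (S n (n - k) k)%:Z)%R).
Proof.
have H := S_eq hkn.
split; first by lia.
move=> hk1; have HTC := T_C hkn (_ : k < n); rewrite HTC in H *; last by lia.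
 split => //.
rewrite -HTC; lia.
Qed.
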